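(* Let $k,\ell,n,p$ be positive integers, and let $C\in\mathbb{R}^{k\times \ell}$, $A\in\mathbb{R}^{n\times p}$, $M\in\mathbb{R}^{k\times k}$ symmetric positive semidefinite, and $B\in\mathbb{R}^{k\times n}$ injective. Let $(u,y)\in\mathbb{R}^k\times\mathbb{R}^n$ and $q,s\in\mathbb{R}^\ell_{++}$, $w,r\in\mathbb{R}^p_{++}$ (vectors with strictly positive entries), and set $Q=\mathrm{diag}(q)$, $S=\mathrm{diag}(s)$, $W=\mathrm{diag}(w)$, $R=\mathrm{diag}(r)$. Consider the square matrix \[ F^{(1)}=\begin{bmatrix} 0&0&-C^T&0&-I&0\\ 0&0&0&-A^T&0&-I\\ C&0&M&-B&0&0\\ 0&A&B^T&0&0&0\\ Q&0&0&0&S&0\\ 0&W&0&0&0&R \end{bmatrix} \] (acting on vectors ordered as $(q,w,u,y,s,r)$). Then $F^{(1)}$ is invertible if and only if the matrix \[ \begin{bmatrix} M+CSQ^{-1}C^T & -B\\ B^T & ARW^{-1}A^T\end{bmatrix} \] is invertible, and this in turn holds if and only if $\mathrm{null}(M)\cap\mathrm{null}(B^T)\cap\mathrm{null}(C^T)=\{0\}$.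
   Context: $F^{(1)}$ is the Jacobian of the relaxed KKT map $F_\mu(q,w,u,y,s,r)=(C^Tu+s-c,\;A^Ty+r-a,\;Mu+Cq-By-b,\;B^Tu+Aw,\;Qs-\mu\mathbf{1},\;Wr-\mu\mathbf{1})$ for the problem of minimizing $\rho(y)=\sup_{C^Tu\le c}\{\langle u,b+By\rangle-\tfrac12\langle u,Mu\rangle\}$ subject to $A^Ty\le a$. $\mathrm{null}(\cdot)$ denotes the null space. *)

(* Defs.v *)
From HB Require Import structures.
From mathcomp Require Import all_boot all_order all_algebra.
Set Implicit Arguments. Unset Strict Implicit. Unset Printing Implicit Defensive.
Import Order.TTheory GRing.Theory Num.Theory.
Local Open Scope ring_scope.

(* The Jacobian F^(1), acting on vectors ordered (q, w, u, y, s, r) of sizes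
   (l, p, k, n, l, p).  Q S W R are the diagonal matrices diag(q) etc. *)
Definition F1 (R : realFieldType) (k l n p : nat)
  (C : 'M[R]_(k, l)) (A : 'M[R]_(n, p)) (M : 'M[R]_k) (B : 'M[R]_(k, n))
  (Q S : 'M[R]_l) (W Rr : 'M[R]_p) : 'M[R]_(l + p + k + n + l + p) :=
  col_mx (col_mx (col_mx (col_mx (col_mx
    (row_mx (row_mx (row_mx (row_mx (row_mx (0 : 'M_(l, l)) (0 : 'M_(l, p))) (- C^T)) (0 : 'M_(l, n))) (- 1%:M)) (0 : 'M_(l, p)))
    (row_mx (row_mx (row_mx (row_mx (row_mx (0 : 'M_(p, l)) (0 : 'M_(p, p))) (0 : 'M_(p, k))) (- A^T)) (0 : 'M_(p, l))) (- 1%:M)))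
    (row_mx (row_mx (row_mx (row_mx (row_mx C (0 : 'M_(k, p))) M) (- B)) (0 : 'M_(k, l))) (0 : 'M_(k, p))))
    (row_mx (row_mx (row_mx (row_mx (row_mx (0 : 'M_(n, l)) A) B^T) (0 : 'M_(n, n))) (0 : 'M_(n, l))) (0 : 'M_(n, p))))
    (row_mx (row_mx (row_mx (row_mx (row_mx Q (0 : 'M_(l, p))) (0 : 'M_(l, k))) (0 : 'M_(l, n))) S) (0 : 'M_(l, p))))
    (row_mx (row_mx (row_mx (row_mx (row_mx (0 : 'M_(p, l)) W) (0 : 'M_(p, k))) (0 : 'M_(p, n))) (0 : 'M_(p, l))) Rr).

Definition Fred (R : realFieldType) (k l n p : nat)
  (C : 'M[R]_(k, l)) (A : 'M[R]_(n, p)) (M : 'M[R]_k) (B : 'M[R]_(k, n))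
  (Q S : 'M[R]_l) (W Rr : 'M[R]_p) : 'M[R]_(k + n) :=
  block_mx (M + C *m S *m invmx Q *m C^T) (- B)
           B^T (A *m Rr *m invmx W *m A^T).

(* Main.v *)
Require Import Defs.
From HB Require Import structures.
From mathcomp Require Import all_boot all_order all_algebra.
Import Order.TTheory GRing.Theory Num.Theory.
From mathcomp Require Import ring lra.
Set Implicit Arguments. Unset Strict Implicit. Unset Printing Implicit Defensive.
Local Open Scope ring_scope.

Lemma unit_kerP (F : fieldType) n (A : 'M[F]_n) :
  A \in unitmx <-> (forall x : 'cV_n, A *m x = 0 -> x = 0).
Proof.
split.
  move=> uA x Ax; by rewrite -[x]mul1mx -(mulVmx uA) -mulmxA Ax mulmx0.
move=> H; rewrite -unitmx_tr -row_free_unit -kermx_eq0; apply/eqP.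
apply/row_matrixP => i; rewrite row0.
have K := mulmx_ker A^T.
have : row i (kermx A^T) *m A^T = 0 by rewrite -row_mul K row0.
move=> E. rewrite -[row i _]trmxK. rewrite (H (row i (kermx A^T))^T) ?linear0 //.
by rewrite -[_ *m _]trmxK trmx_mul trmxK E linear0.
Qed.

Lemma tr11 (F : comRingType) (m : 'M[F]_1) : m^T = m.
Proof. by apply/matrixP => i j; rewrite !ord1 mxE. Qed.

Lemma quad_diag (F : realFieldType) m (d : 'rV[F]_m) (z : 'cV[F]_m) :
  (z^T *m diag_mx d *m z) 0 0 = \sum_i d 0 i * z i 0 ^+ 2.
Proof.
rewrite -mulmxA mul_diag_mx mxE; apply: eq_bigr => i _.
by rewrite !mxE expr2 mulrCA mulrA.
Qed.

Lemma quad_diag_ge0 (F : realFieldType) m (d : 'rV[F]_m) (z : 'cV[F]_m) :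
  (forall i, 0 < d 0 i) -> 0 <= (z^T *m diag_mx d *m z) 0 0.
Proof.
move=> hd; rewrite quad_diag; apply: sumr_ge0 => i _.
by apply: mulr_ge0; [apply: ltW | apply: sqr_ge0].
Qed.

Lemma quad_diag_eq0 (F : realFieldType) m (d : 'rV[F]_m) (z : 'cV[F]_m) :
  (forall i, 0 < d 0 i) -> (z^T *m diag_mx d *m z) 0 0 = 0 -> z = 0.
Proof.
move=> hd; rewrite quad_diag => /psumr_eq0P H.
have {}H := H (fun k _ => mulr_ge0 (ltW (hd k)) (sqr_ge0 (z k 0))).
apply/matrixP => i j; rewrite !ord1 mxE.
move: (H i isT) => /eqP; rewrite mulf_eq0 (gt_eqF (hd i)) /= sqrf_eq0 => /eqP ->.
by [].
Qed.

Lemma psd_null (F : realFieldType) k (M : 'M[F]_k) (v : 'cV[F]_k) :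
  M^T = M -> (forall x : 'cV[F]_k, 0 <= (x^T *m M *m x) 0 0) ->
  (v^T *m M *m v) 0 0 = 0 -> M *m v = 0.
Proof.
move=> hs hp h0.
set w := M *m v.
have Hb2 : (w^T *m M *m v) 0 0 = (w^T *m diag_mx (const_mx 1) *m w) 0 0.
  by rewrite diag_const_mx mulmx1 -mulmxA.
have Hb1 : v^T *m M *m w = w^T *m M *m v.
  by rewrite -[LHS]tr11 !trmx_mul trmxK hs mulmxA.
have Ht t : 0 <= t * (2 * (w^T *m M *m v) 0 0) + t ^+ 2 * (w^T *m M *m w) 0 0.
  have := hp (v + t *: w).
  have -> : (v + t *: w)^T = v^T + t *: w^T by apply/matrixP => i j; rewrite !mxE.
  rewrite !mulmxDl !mulmxDr.
  rewrite -!(scalemxAl t) -!(scalemxAr t) !scalerA.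
  rewrite Hb1; move: h0.
  move: (v^T *m M *m v) (w^T *m M *m v) (w^T *m M *m w) => a b c.
  rewrite !mxE => ->; lra.
set b := (w^T *m M *m v) 0 0 in Hb2 Ht *.
set c := (w^T *m M *m w) 0 0 in Ht.
have c0 : 0 <= c by rewrite /c hp.
have b0 : b = 0.
  have := Ht (- b / (c + 1)).
  have c1 : c + 1 != 0 by rewrite gt_eqF // ltr_wpDl.
  set e := (c + 1)^-1.
  have ce : (c + 1) * e = 1 by rewrite mulfV.
  have e0 : 0 < e by rewrite invr_gt0 ltr_wpDl.
  rewrite /= expr2 => H.
  have ec : e * c = 1 - e by rewrite -ce; ring.
  have H2 : 0 <= - (b * b * e * (1 + e)).
    have -> : - (b * b * e * (1 + e)) = - b / (c + 1) * (2 * b) + - b / (c + 1) * (- b / (c + 1)) * c.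
      rewrite -/e. have -> : - b * e * (- b * e) * c = b * b * e * (e * c) by ring.
      rewrite ec; ring.
    exact: H.
  have : b * b * (e * (1 + e)) <= 0 by lra.
  have ep : 0 < e * (1 + e) by apply: mulr_gt0 => //; lra.
  rewrite pmulr_lle0 //.
  move=> bb; apply/eqP; rewrite -sqrf_eq0 eq_le sqr_ge0 andbT expr2 //.
apply: (@quad_diag_eq0 _ _ (const_mx 1)) => [i|]; first by rewrite mxE.
by rewrite -Hb2.
Qed.

Lemma mxaddE (F : zmodType) m n (X Y : 'M[F]_(m, n)) i j : (X + Y) i j = X i j + Y i j.
Proof. by rewrite mxE. Qed.
Lemma mxoppE (F : zmodType) m n (X : 'M[F]_(m, n)) i j : (- X) i j = - X i j.
Proof. by rewrite mxE. Qed.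
Lemma mx0E (F : zmodType) m n i j : (0 : 'M[F]_(m, n)) i j = 0.
Proof. by rewrite mxE. Qed.

Lemma col0P (F : zmodType) m1 m2 n (X : 'M[F]_(m1, n)) (Y : 'M[F]_(m2, n)) :
  col_mx X Y = 0 -> X = 0 /\ Y = 0.
Proof. by rewrite -col_mx0 => /eq_col_mx. Qed.

Section Core.
Variables (F : realFieldType) (k l n p : nat).
Variables (C : 'M[F]_(k, l)) (A : 'M[F]_(n, p)) (M : 'M[F]_k) (B : 'M[F]_(k, n)).
Variables (d1 : 'rV[F]_l) (d2 : 'rV[F]_p).
Hypothesis hMsym : M^T = M.
Hypothesis hMpsd : forall v : 'cV[F]_k, 0 <= (v^T *m M *m v) 0 0.
Hypothesis hBinj : injective (fun x : 'cV[F]_n => B *m x).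
Hypothesis hd1 : forall i, 0 < d1 0 i.
Hypothesis hd2 : forall i, 0 < d2 0 i.

Definition Cond := forall v : 'cV[F]_k, M *m v = 0 -> B^T *m v = 0 -> C^T *m v = 0 -> v = 0.

Lemma core (v : 'cV[F]_k) (z : 'cV[F]_n) :
  Cond ->
  (M + C *m diag_mx d1 *m C^T) *m v + (- B) *m z = 0 ->
  B^T *m v + A *m diag_mx d2 *m A^T *m z = 0 -> v = 0 /\ z = 0.
Proof.
move=> hc E1 E2.
have F1 : v^T *m ((M + C *m diag_mx d1 *m C^T) *m v + (- B) *m z) = 0 by rewrite E1 mulmx0.
have F2 : z^T *m (B^T *m v + A *m diag_mx d2 *m A^T *m z) = 0 by rewrite E2 mulmx0.
move: F1 F2.
rewrite !mulmxDr mulmxDl !mulmxDr.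
have -> : v^T *m (C *m diag_mx d1 *m C^T *m v) = (C^T *m v)^T *m diag_mx d1 *m (C^T *m v).
  by rewrite trmx_mul trmxK !mulmxA.
have -> : z^T *m (A *m diag_mx d2 *m A^T *m z) = (A^T *m z)^T *m diag_mx d2 *m (A^T *m z).
  by rewrite trmx_mul trmxK !mulmxA.
have -> : v^T *m (- B *m z) = - (z^T *m (B^T *m v)).
  by rewrite mulNmx mulmxN; congr (- _); rewrite -[RHS]tr11 !trmx_mul !trmxK mulmxA.
rewrite mulmxA.
have ha := hMpsd v.
have hb := quad_diag_ge0 (C^T *m v) hd1.
have hc2 := quad_diag_ge0 (A^T *m z) hd2.
move: ha hb hc2.
set a := (v^T *m M *m v).
set b := ((C^T *m v)^T *m diag_mx d1 *m (C^T *m v)).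
set c := ((A^T *m z)^T *m diag_mx d2 *m (A^T *m z)).
set e := (z^T *m (B^T *m v)).
move=> ha hb hc2 G1 G2.
have {}G1 := congr1 (fun m : 'M[F]_1 => m 0 0) G1.
have {}G2 := congr1 (fun m : 'M[F]_1 => m 0 0) G2.
move: G1 G2 => /=; rewrite !mxaddE ?mxoppE !mx0E => G1 G2.
have a0 : a 0 0 = 0 by lra.
have b0 : b 0 0 = 0 by lra.
have c0 : c 0 0 = 0 by lra.
have Mv := psd_null hMsym hMpsd a0.
have Cv := quad_diag_eq0 hd1 b0.
have Az := quad_diag_eq0 hd2 c0.
have z0 : z = 0.
  apply: hBinj => /=; rewrite mulmx0.
  move: E1; rewrite mulmxDl Mv add0r -!mulmxA Cv !mulmx0 add0r mulNmx.
  by move/eqP; rewrite oppr_eq0 => /eqP.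
split=> //; apply: hc => //.
by move: E2; rewrite z0 mulmx0 addr0.
Qed.

Lemma fred_unit :
  block_mx (M + C *m diag_mx d1 *m C^T) (- B) B^T (A *m diag_mx d2 *m A^T) \in unitmx <-> Cond.
Proof.
split.
  move=> /unit_kerP H v Mv Bv Cv.
  have := H (col_mx v 0); rewrite mul_block_col !mulmx0 !addr0 mulmxDl Mv add0r.
  rewrite -!mulmxA Cv !mulmx0 Bv col_mx0 => /(_ erefl) /esym.
  by rewrite -col_mx0 => /eq_col_mx [<-].
move=> hc; apply/unit_kerP => x.
rewrite -[x]vsubmxK mul_block_col -col_mx0 => /eq_col_mx [E1 E2].
by have [-> ->] := core hc E1 E2.
Qed.

Lemma f1_unit (Q S : 'M[F]_l) (W Rr : 'M[F]_p) :
  Q \in unitmx -> Q *m diag_mx d1 = S -> W \in unitmx -> W *m diag_mx d2 = Rr ->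
  F1 C A M B Q S W Rr \in unitmx <-> Cond.
Proof.
move=> uQ hS uW hR; split.
  move=> /unit_kerP H v Mv Bv Cv.
  have := H (col_mx (col_mx (col_mx (col_mx (col_mx 0 0) v) 0) 0) 0).
  rewrite /F1 !mul_col_mx !mul_row_col !mulmx0 !mul0mx !mulNmx Mv Bv Cv.
  rewrite !(oppr0, addr0, add0r) !col_mx0 => /(_ erefl).
  by move=> /col0P [/col0P [/col0P [/col0P [_ ->] _] _] _].
move=> hc; apply/unit_kerP => x.
rewrite -[x]vsubmxK -[usubmx x]vsubmxK -[usubmx (usubmx x)]vsubmxK.
rewrite -[usubmx (usubmx (usubmx x))]vsubmxK -[usubmx (usubmx (usubmx (usubmx x)))]vsubmxK.
set x1 := usubmx (usubmx _).
set x2 := dsubmx (usubmx (usubmx (usubmx (usubmx x)))).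
set x3 := dsubmx (usubmx (usubmx (usubmx x))).
set x4 := dsubmx (usubmx (usubmx x)).
set x5 := dsubmx (usubmx x).
set x6 := dsubmx x.
rewrite /F1 !mul_col_mx !mul_row_col !mul0mx !mulNmx !mul1mx.
rewrite !(addr0, add0r).
move=> /col0P [/col0P [/col0P [/col0P [/col0P [e1 e2] e3] e4] e5] e6].
have h5 : x5 = - (C^T *m x3) by rewrite (subr0_eq e1).
have h6 : x6 = - (A^T *m x4) by rewrite (subr0_eq e2).
have h1 : x1 = diag_mx d1 *m C^T *m x3.
  apply/subr0_eq; apply: (proj1 (unit_kerP Q) uQ).
  by rewrite mulmxBr !mulmxA hS; move: e5; rewrite h5 mulmxN !mulmxA.
have h2 : x2 = diag_mx d2 *m A^T *m x4.
  apply/subr0_eq; apply: (proj1 (unit_kerP W) uW).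
  by rewrite mulmxBr !mulmxA hR; move: e6; rewrite h6 mulmxN !mulmxA.
have E1 : (M + C *m diag_mx d1 *m C^T) *m x3 + (- B) *m x4 = 0.
  by rewrite mulmxDl mulNmx -e3 h1 !mulmxA (addrC (M *m x3)).
have E2 : B^T *m x3 + A *m diag_mx d2 *m A^T *m x4 = 0.
  by rewrite -e4 h2 !mulmxA addrC.
have [z3 z4] := core hc E1 E2.
rewrite h1 h2 h5 h6 z3 z4 !mulmx0 !oppr0 !col_mx0.
by [].
Qed.
End Core.

Lemma diag_mul (F : comRingType) m (a b : 'rV[F]_m) :
  diag_mx a *m diag_mx b = diag_mx (\row_i (a 0 i * b 0 i)).
Proof.
apply/matrixP => i j; rewrite mul_diag_mx !mxE.
by case: (i =P j) => [->|_]; rewrite ?mulr1n ?mulr0n ?mulr0.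
Qed.

Lemma diag_inv (F : fieldType) m (a : 'rV[F]_m) :
  (forall i, a 0 i != 0) ->
  diag_mx a \in unitmx /\ invmx (diag_mx a) = diag_mx (\row_i (a 0 i)^-1).
Proof.
move=> ha.
have E : diag_mx a *m diag_mx (\row_i (a 0 i)^-1) = 1%:M.
  rewrite diag_mul -diag_const_mx; congr diag_mx; apply/rowP => i.
  by rewrite !mxE mulfV.
have [u _] := mulmx1_unit E; split=> //.
by rewrite -[invmx _]mulmx1 -E mulmxA mulVmx // mul1mx.
Qed.

Theorem theorem5p2 (R : realFieldType) (k l n p : nat)
  (hk : (0 < k)%N) (hl : (0 < l)%N) (hn : (0 < n)%N) (hp : (0 < p)%N)
  (C : 'M[R]_(k, l)) (A : 'M[R]_(n, p)) (M : 'M[R]_k) (B : 'M[R]_(k, n))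
  (u : 'cV[R]_k) (y : 'cV[R]_n)
  (q s : 'cV[R]_l) (w r : 'cV[R]_p)
  (hMsym : M^T = M)
  (hMpsd : forall v : 'cV[R]_k, 0 <= (v^T *m M *m v) 0 0)
  (hBinj : injective (fun x : 'cV[R]_n => B *m x))
  (hq : forall i, 0 < q i 0) (hs : forall i, 0 < s i 0)
  (hw : forall i, 0 < w i 0) (hr : forall i, 0 < r i 0) :
  let Q := diag_mx q^T in let S := diag_mx s^T in
  let W := diag_mx w^T in let Rr := diag_mx r^T in
  (F1 C A M B Q S W Rr \in unitmx <-> Fred C A M B Q S W Rr \in unitmx) /\
  (Fred C A M B Q S W Rr \in unitmx <->
     (forall v : 'cV[R]_k, M *m v = 0 -> B^T *m v = 0 -> C^T *m v = 0 -> v = 0)).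
Proof.
move=> Q S W Rr.
have qn i : q^T 0 i != 0 by rewrite mxE gt_eqF.
have wn i : w^T 0 i != 0 by rewrite mxE gt_eqF.
have [uQ iQ] := diag_inv qn.
have [uW iW] := diag_inv wn.
set d1 := \row_i (s i 0 / q i 0).
set d2 := \row_i (r i 0 / w i 0).
have hd1 i : 0 < d1 0 i by rewrite mxE divr_gt0.
have hd2 i : 0 < d2 0 i by rewrite mxE divr_gt0.
have hS : Q *m diag_mx d1 = S.
  rewrite /Q diag_mul; congr diag_mx; apply/rowP => i; rewrite !mxE.
  by rewrite mulrC -mulrA mulVf ?mulr1 // gt_eqF.
have hR : W *m diag_mx d2 = Rr.
  rewrite /W diag_mul; congr diag_mx; apply/rowP => i; rewrite !mxE.
  by rewrite mulrC -mulrA mulVf ?mulr1 // gt_eqF.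
have hS' : S *m invmx Q = diag_mx d1.
  rewrite /Q iQ /S diag_mul; congr diag_mx; apply/rowP => i; rewrite !mxE.
  by [].
have hR' : Rr *m invmx W = diag_mx d2.
  rewrite /W iW /Rr diag_mul; congr diag_mx; apply/rowP => i; rewrite !mxE.
  by [].
have EF : Fred C A M B Q S W Rr =
  block_mx (M + C *m diag_mx d1 *m C^T) (- B) B^T (A *m diag_mx d2 *m A^T).
  by rewrite /Fred -(mulmxA C S) hS' -(mulmxA A Rr) hR'.
have H1 := @f1_unit R k l n p C A M B d1 d2 hMsym hMpsd hBinj hd1 hd2 Q S W Rr uQ hS uW hR.
have H2 := @fred_unit R k l n p C A M B d1 d2 hMsym hMpsd hBinj hd1 hd2.
rewrite EF; split; first by rewrite H1 H2.
exact: H2.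
Qed.
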